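(* Let $t$ be a positive multiple of $12$ and let $n=t^2+1$. There exists a tree $T$ on $n$ vertices such that, for every (deterministic) strategy of the cat in the Cat and Mouse game on $T$, there is a sequence of mouse positions $(m_i)_{i\ge1}$ such that $\mathrm{rad}_T(M_i)>t/12$ for every $i$; that is, the mouse avoids being localised up to distance $t/12$ forever.
   Context: The Cat and Mouse game is played on a simple, undirected, connected graph $G$ in time steps $i=1,2,\dots$. The mouse occupies vertices $m_1,m_2,\dots$, where for $i\ge2$, $m_i$ equals $m_{i-1}$ or is a neighbour of $m_{i-1}$. At time $i$ the cat tests an arbitrary vertex $c_i$; for $i\ge2$ it is told $b_i=1$ if $d(c_i,m_i)\le d(c_{i-1},m_{i-1})$ and $b_i=0$ otherwise ($d$ = graph distance). A cat strategy is $(c_1,c_2,f)$ with $f:\bigcup_{i\in\mathbb N}\{0,1\}^i\to V(G)$ and $c_i=f(b_2,\dots,b_{i-1})$ for $i\ge3$; it is deterministic, fixed in advance, and known to the mouse (so the mouse's sequence may depend on it). $M_i$ is the set of vertices $v$ for which there exist $\tilde m_1,\dots,\tilde m_i$ with $\tilde m_i=v$, each $\tilde m_j$ in the closed neighbourhood of $\tilde m_{j-1}$, and for each $2\le j\le i$: $d(c_j,\tilde m_j)\le d(c_{j-1},\tilde m_{j-1})$ iff $b_j=1$. $\mathrm{rad}_G(W)=\min_{v\in V(G)}\max_{w\in W}d(v,w)$. *)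

(* Defs.v *)
From mathcomp Require Import all_boot.
Set Implicit Arguments. Unset Strict Implicit. Unset Printing Implicit Defensive.

Section Graphs.
Variable V : finType.
Variable e : rel V.

Definition simple_graph : Prop := irreflexive e /\ symmetric e.

Definition connected_graph : Prop := forall x y : V, connect e x y.

Definition acyclic_graph : Prop :=
  forall s : seq V, uniq s -> 2 < size s -> ~~ cycle e s.

Definition is_tree : Prop := simple_graph /\ connected_graph /\ acyclic_graph.

Fixpoint ball (k : nat) (x : V) : {set V} :=
  match k with
  | 0 => [set x]
  | k'.+1 => ball k' x :|: [set y | [exists z in ball k' x, e z y]]
  end.

(* graph distance: least k with y in ball k x (equal to #|V| if unreachable,
   which never happens in a connected graph) *)
Definition dist (x y : V) : nat := find (fun k => y \in ball k x) (iota 0 #|V|).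

Definition rad (W : {set V}) : nat :=
  \big[minn/#|V|]_(v : V) \max_(w in W) dist v w.

(* The Cat and Mouse game, 0-based: time i (paper) is index i-1 here.
   c1 c2 : first two tests, f : cat strategy, m : mouse positions.
   play k = ([b_2; ...; b_(k+1)], c_(k+1)). *)
Variables (c1 c2 : V) (f : seq bool -> V) (m : nat -> V).

Fixpoint play (k : nat) : seq bool * V :=
  match k with
  | 0 => ([::], c1)
  | k'.+1 =>
      let bs := (play k').1 in
      let cprev := (play k').2 in
      let ck := if k' is 0 then c2 else f bs in
      (rcons bs (dist ck (m k) <= dist cprev (m k')), ck)
  end.

(* cat k = c_(k+1);  bit k = b_(k+1)  (k >= 1) *)
Definition cat (k : nat) : V := (play k).2.
Definition bit (k : nat) : bool := last false (play k).1.

(* Mset k = M_(k+1) *)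
Definition Mset (k : nat) : {set V} :=
  [set v | [exists mt : {ffun 'I_k.+1 -> V},
     (mt ord_max == v) &&
     [forall j : 'I_k,
        ((mt (inord j.+1) == mt (inord j)) || e (mt (inord j)) (mt (inord j.+1)))
        && ((dist (cat j.+1) (mt (inord j.+1)) <= dist (cat j) (mt (inord j)))
            == bit j.+1)]]].

End Graphs.

(* Main.v *)
Require Import Defs.
From mathcomp Require Import all_boot.
From mathcomp Require Import zify.
Set Implicit Arguments. Unset Strict Implicit. Unset Printing Implicit Defensive.

Section Spider.
Variables N' L' : nat.
Local Notation N := N'.+1.
Local Notation L := L'.+1.
Definition Pt := option ('I_N * 'I_L).

Definition dep (p : Pt) : nat := if p is Some (_, i) then (i : nat).+1 else 0.
Definition Dp (p q : Pt) : nat :=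
  match p, q with
  | Some (l1, i1), Some (l2, i2) =>
      if l1 == l2 then ((i1 : nat) - i2) + ((i2 : nat) - i1) else (i1 : nat).+1 + (i2 : nat).+1
  | _, _ => dep p + dep q
  end.
Definition E (p q : Pt) : bool :=
  match p, q with
  | None, Some (_, i) => (i : nat) == 0
  | Some (_, i), None => (i : nat) == 0
  | Some (l1, i1), Some (l2, i2) =>
      (l1 == l2) && (((i1 : nat).+1 == i2) || ((i2 : nat).+1 == i1))
  | None, None => false
  end.

Lemma E_sym p q : E p q = E q p.
Proof.
case: p => [[l1 i1]|]; case: q => [[l2 i2]|] //=.
by rewrite eq_sym orbC.
Qed.

Lemma E_irr p : E p p = false.
Proof. case: p => [[l i]|] //=; rewrite eqxx /=; apply/negbTE; lia. Qed.

Lemma E_dep p q : E p q -> dep q = (dep p).+1 \/ dep p = (dep q).+1.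
Proof.
case: p => [[l1 i1]|]; case: q => [[l2 i2]|] //=; try (move/eqP=> ->; by auto).
case/andP=> _ /orP [] /eqP <-; by auto.
Qed.

Lemma Some_eq (l1 l2 : 'I_N) (i1 i2 : 'I_L) :
  l1 = l2 -> (i1 : nat) = i2 -> Some (l1, i1) = Some (l2, i2).
Proof. by move=> -> /val_inj ->. Qed.

Lemma E_down_uniq p q q' : E p q -> E p q' -> dep q < dep p -> dep q' < dep p -> q = q'.
Proof.
case: p => [[l i]|]; case: q => [[l2 i2]|]; case: q' => [[l3 i3]|] //=.
- case/andP=> /eqP <- /orP[] /eqP H2; case/andP=> /eqP <- /orP [] /eqP H3 h1 h2;
  apply: Some_eq => //; lia.
- case/andP=> _ /orP[] /eqP H2 /eqP H3; lia.
- move=> /eqP H2; case/andP=> _ /orP[] /eqP H3; lia.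
Qed.

Lemma Dp_sym p q : Dp p q = Dp q p.
Proof.
case: p => [[l1 i1]|]; case: q => [[l2 i2]|] //=; try by rewrite addnC.
rewrite eq_sym; case: ifP => _; lia.
Qed.

Lemma Dp0 p q : Dp p q = 0 -> p = q.
Proof.
case: p => [[l1 i1]|]; case: q => [[l2 i2]|] //=.
case: eqP => // -> H; apply: Some_eq => //; lia.
Qed.

Lemma Dpxx p : Dp p p = 0.
Proof. case: p => [[l i]|] //=; rewrite eqxx; lia. Qed.

Lemma Dp_edge x z y : E z y -> Dp x y <= (Dp x z).+1.
Proof.
case: x => [[lx ix]|]; case: z => [[lz iz]|]; case: y => [[ly iy]|] //=.
- case/andP=> /eqP <- /orP[] /eqP H; case: ifP => _; lia.
- move/eqP=> H; case: ifP => _; lia.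
- move/eqP=> H; case: ifP => _; lia.
- case/andP=> _ /orP[] /eqP H; lia.
- move/eqP; lia.
Qed.

Lemma Dp_pred x y : 0 < Dp x y -> exists z, E z y /\ (Dp x z).+1 = Dp x y.
Proof.
case: y => [[ly iy]|].
- case Hi: (iy : nat) => [|j].
  + case: x => [[lx ix]|] /=.
    * case: (eqVneq lx ly) => [<-|ne].
      -- rewrite Hi => H. have Hj : 1 < L by have := ltn_ord ix; lia.
         exists (Some (lx, Ordinal Hj)); rewrite /= !eqxx /=; split; first by apply/orP; right; apply/eqP; lia.
         lia.
      -- move=> _; exists None; rewrite /= Hi; split => //; lia.
    * by move=> _; exists None; rewrite /= Hi.
  + have Hj : j < L by have := ltn_ord iy; lia.
    case: x => [[lx ix]|] /=.
    * case: (eqVneq lx ly) => [<-|ne].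
      -- move=> H.
         case: (ltnP (ix : nat) iy) => Hc.
         ++ exists (Some (lx, Ordinal Hj)); rewrite /= !eqxx /=; split; first by apply/orP; left; apply/eqP; lia.
            lia.
         ++ have Hjj : (iy : nat).+1 < L by have := ltn_ord ix; lia.
            exists (Some (lx, Ordinal Hjj)); rewrite /= !eqxx /=; split; first by apply/orP; right; apply/eqP; lia.
            lia.
      -- move=> _; exists (Some (ly, Ordinal Hj)); rewrite /= !eqxx /= ?(negbTE ne); split; first by apply/orP; left; apply/eqP; lia.
         lia.
    * move=> _; exists (Some (ly, Ordinal Hj)); rewrite /= !eqxx /=; split; first by apply/orP; left; apply/eqP; lia.
      lia.
- case: x => [[lx ix]|] //= H.
  have Hj : (ix : nat) < L by have := ltn_ord ix; lia.
  exists (Some (lx, ord0)); rewrite /= !eqxx /=; split => //; lia.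
Qed.

Lemma Dp_bound x y : Dp x y <= 2 * L.
Proof.
case: x => [[lx ix]|]; case: y => [[ly iy]|] /=.
- have := ltn_ord ix; have := ltn_ord iy; case: ifP => _; lia.
- have := ltn_ord ix; lia.
- have := ltn_ord iy; lia.
- lia.
Qed.

Lemma parent_ex p : 0 < dep p -> exists z, E p z /\ dep z < dep p.
Proof.
case: p => [[l i]|] //= _.
case Hi: (i : nat) => [|j].
- by exists None; rewrite /= ?Hi.
- have Hj : j < L by have := ltn_ord i; lia.
  exists (Some (l, Ordinal Hj)); rewrite /= !eqxx /= ?Hi; split => //.
  by apply/orP; right.
Qed.

End Spider.

Section OnV.
Variables (N' L' : nat) (V : finType) (g : V -> Pt N' L') (gi : Pt N' L' -> V).
Hypotheses (gK : cancel g gi) (giK : cancel gi g).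
Local Notation L := L'.+1.

Definition ev : rel V := fun u v => E (g u) (g v).

Lemma ginj : injective g.
Proof. exact: can_inj gK. Qed.

Lemma ball_spec k x y : (y \in ball ev k x) = (Dp (g x) (g y) <= k).
Proof.
elim: k y => [|k IH] y /=.
- rewrite in_set1; apply/eqP/idP => [->|H]; first by rewrite Dpxx.
  apply: ginj; apply/esym/Dp0; lia.
- rewrite in_setU IH in_set; apply/orP/idP.
  + case => [H|/existsP [z /andP [Hz Hzy]]]; first lia.
    rewrite IH in Hz; have := Dp_edge (g x) Hzy; lia.
  + move=> H; case: (leqP (Dp (g x) (g y)) k) => Hk; [by left|right].
    have [|z [Hz Hd]] := @Dp_pred _ _ (g x) (g y); first lia.
    apply/existsP; exists (gi z); rewrite IH giK; apply/andP; split; first lia.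
    by rewrite /ev giK.
Qed.

Lemma find_leq_iota D n : D < n -> find (fun k => D <= k) (iota 0 n) = D.
Proof.
move=> H; rewrite -(subnKC (ltnW H)) iotaD find_cat.
have -> : has (fun k => D <= k) (iota 0 D) = false.
  apply/negbTE/hasPn => k; rewrite mem_iota; lia.
rewrite size_iota add0n.
case E1: (n - D) => [|m]; first lia.
by rewrite /= leqnn addn0.
Qed.

Lemma dist_spec x y : 2 * L < #|V| -> dist ev x y = Dp (g x) (g y).
Proof.
move=> H; rewrite /dist (eq_find (a2 := fun k => Dp (g x) (g y) <= k)); last first.
  by move=> k; rewrite ball_spec.
apply: find_leq_iota; have := Dp_bound (g x) (g y); lia.
Qed.

Lemma ev_sym : symmetric ev.
Proof. by move=> x y; rewrite /ev E_sym. Qed.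

Lemma conn_root x : connect ev x (gi None).
Proof.
move: {2}(dep (g x)) (leqnn (dep (g x))) => d.
elim: d x => [|d IH] x Hx.
- have H0 : g x = None by move: Hx; case: (g x) => [[l i]|].
  by rewrite -H0 gK connect0.
- case: (posnP (dep (g x))) => H0.
  + have H1 : g x = None by move: H0; case: (g x) => [[l i]|].
    by rewrite -H1 gK connect0.
  + have [z [Ez Dz]] := parent_ex H0.
    apply: connect_trans (connect1 _) (IH (gi z) _); rewrite /ev giK //; lia.
Qed.

Lemma ev_tree : is_tree ev.
Proof.
split; [|split].
- split; last exact: ev_sym.
  by move=> x; rewrite /ev E_irr.
- move=> x y; apply: connect_trans (conn_root x) _.
  by rewrite (sym_connect_sym ev_sym); apply: conn_root.
- move=> s Us Ss; apply/negP => Cs.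
  have s0 : head (gi None) s \in s by case: s Ss {Us Cs} => //= a s' _; rewrite inE eqxx.
  case: (arg_maxnP (fun v => dep (g v)) s0) => x xs xmax.
  case: (rot_to xs) => i s' Hrot.
  have Us' : uniq (x :: s') by rewrite -Hrot rot_uniq.
  have Cs' : cycle ev (x :: s') by rewrite -Hrot rot_cycle.
  have Ss' : 2 < size (x :: s') by rewrite -Hrot size_rot.
  case: s' Hrot Us' Cs' Ss' => [|y r] // Hrot Us' Cs' Ss'.
  case: r Hrot Us' Cs' Ss' => [|z0 r] // Hrot Us' Cs' Ss'.
  have ins : forall w, w \in x :: y :: z0 :: r -> w \in s.
    by move=> w; rewrite -Hrot mem_rot.
  move: Cs'; rewrite /= => /andP [Exy]; rewrite rcons_path => /andP [_ /andP [_ Elast]].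
  set z := last z0 r in Elast.
  have zin : z \in z0 :: r by apply: mem_last.
  have yz : y != z.
    have ny : y \notin z0 :: r by move: Us' => /andP [_ /andP [ny _]].
    by apply: contraNneq ny => ->.
  have dy : dep (g y) <= dep (g x) by apply: xmax; apply: ins; rewrite !inE eqxx orbT.
  have dz : dep (g z) <= dep (g x).
    by apply: xmax; apply: ins; rewrite !inE; move: zin; rewrite inE => ->; rewrite !orbT.
  have Exz : E (g x) (g z) by rewrite E_sym; exact: Elast.
  have ly : dep (g y) < dep (g x) by case: (E_dep Exy); lia.
  have lz : dep (g z) < dep (g x) by case: (E_dep Exz); lia.
  move/eqP: yz; apply; apply: ginj; exact: (E_down_uniq Exy Exz ly lz).
Qed.

Lemma rad_ge (W : {set V}) (u w : V) (l1 l2 : 'I_N'.+1) (i1 i2 : 'I_L) (k : nat) :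
  2 * L < #|V| -> u \in W -> w \in W -> g u = Some (l1, i1) -> g w = Some (l2, i2) ->
  l1 != l2 -> k <= i1 -> k <= i2 -> k < rad ev W.
Proof.
move=> HV uW wW gu gw ne k1 k2.
rewrite /rad; apply: (big_ind (fun x => k < x)).
- have := ltn_ord i1; lia.
- by move=> a b Ha Hb; rewrite leq_min Ha Hb.
- move=> v _.
  have Hu := @leq_bigmax_cond _ (fun x => x \in W) (fun w => dist ev v w) _ uW.
  have Hw := @leq_bigmax_cond _ (fun x => x \in W) (fun w => dist ev v w) _ wW.
  rewrite !dist_spec // gu gw /= in Hu Hw.
  case Hv: (g v) Hu Hw => [[lv iv]|] /= Hu Hw; last lia.
  case: (eqVneq lv l1) Hu => [e1|n1] Hu; last lia.
  move: Hw; rewrite e1 (negbTE ne); lia.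
Qed.

End OnV.


Section Policy.
Variable s : nat.
Local Notation h := s.+1.
Definition W0 := 8 * h + 8.

Record st := St { ph : bool; mA : bool; xx : nat; yy : nat; tA : nat; tB : nat }.

Definition mv (a a' : nat) (S : st) : nat * nat :=
  if ph S then
    (if a' == a then (if h < yy S then (xx S, (yy S).-1) else ((xx S).+1, (yy S).+1))
     else ((xx S).+1, yy S))
  else
    (if a' == a.+1 then (if h < yy S then ((xx S).-1, (yy S).-1) else (xx S, (yy S).+1))
     else ((xx S).-1, yy S)).

Definition step (a a' : nat) (S : st) : st :=
  let x' := (mv a a' S).1 in
  let y' := (mv a a' S).2 in
  let qA' := if mA S then x' else y' in
  let qB' := if mA S then y' else x' in
  let tA' := if qA' == 0 then 0 else (tA S).+1 in
  let tB' := if qB' == 0 then 0 else (tB S).+1 in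
  if ph S then
    (if x' == h then St false (~~ mA S) y' x' tA' tB' else St true (mA S) x' y' tA' tB')
  else
    (if x' == 0 then St true (mA S) x' y' tA' tB' else St false (mA S) x' y' tA' tB').

Definition qF (F : bool) (S : st) := if F == mA S then xx S else yy S.
Definition tF (F : bool) (S : st) := if F then tA S else tB S.

Definition Pout S := 2 * (h - xx S) + (yy S - h).
Definition Pret S := 2 * xx S + (h.+1 - yy S).
Definition rem (F : bool) (S : st) :=
  if ph S then (if F == mA S then Pout S + (2 * h + 3) * 2 + (2 * h + 1) else Pout S + (2 * h + 3))
  else (if F == mA S then Pret S else Pret S + (2 * h + 1) + (2 * h + 3)).

Definition invS (S : st) :=
  [/\ h <= yy S <= h.+1, (if ph S then xx S < h else 0 < xx S <= h.+1),
      tA S + rem true S <= W0 & tB S + rem false S <= W0].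

Lemma qF_step F a a' S :
  qF F (step a a' S) = if F == mA S then (mv a a' S).1 else (mv a a' S).2.
Proof.
case: S => p m x y ta tb; rewrite /step /qF /=.
case: (mv _ _ _) => x' y' /=.
case: p; [case: (x' == h) | case: (x' == 0)]; case: F; case: m => //.
Qed.

Lemma tF_step F a a' S :
  tF F (step a a' S) = if qF F (step a a' S) == 0 then 0 else (tF F S).+1.
Proof.
rewrite qF_step; case: S => p m x y ta tb; rewrite /step /tF /=.
case: (mv _ _ _) => x' y' /=.
case: p; [case: (x' == h) | case: (x' == 0)]; case: F; case: m => //.
Qed.

Lemma inv_step a a' S : invS S -> invS (step a a' S).
Proof.
case: S => p m x y ta tb; rewrite /invS /step /mv /rem /Pout /Pret /W0 /=.
case: p; case: m => /=; case=> /andP [y1 y2] Hx HA HB;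
  case: (a' == a); case: (a' == a.+1); case: (ltnP h y) => /= ? ;
  repeat (case: eqP => /= ?); split; try (apply/andP; split); lia.
Qed.

Lemma mv_bit a a' S : invS S ->
  (a' + (mv a a' S).1 <= a + xx S) = (a' + (mv a a' S).2 <= a + yy S).
Proof.
case: S => p m x y ta tb; rewrite /invS /mv /=.
case: p => /=; case=> /andP [y1 y2] Hx _ _;
  [case: eqP => ?; [case: (ltnP h y)|] | case: eqP => ?; [case: (ltnP h y)|]] => /= *;
  apply/idP/idP; lia.
Qed.

Lemma mv_diff a a' S : invS S ->
  [/\ (mv a a' S).1 <= (xx S).+1, xx S <= ((mv a a' S).1).+1,
      (mv a a' S).2 <= (yy S).+1 & yy S <= ((mv a a' S).2).+1].
Proof.
case: S => p m x y ta tb; rewrite /invS /mv /=.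
case: p => /=; case=> /andP [y1 y2] Hx _ _;
  [case: (a' == a); [case: (ltnP h y)|] | case: (a' == a.+1); [case: (ltnP h y)|]] => /= *;
  split; lia.
Qed.

Lemma qF_bit F a a' S : invS S ->
  (a' + qF F (step a a' S) <= a + qF F S) = (a' + qF true (step a a' S) <= a + qF true S).
Proof.
move=> I; rewrite !qF_step /qF; have := mv_bit a a' I.
case: F; case: (mA S) => //= ->.
Qed.

Lemma qF_diff F a a' S : invS S ->
  qF F (step a a' S) <= (qF F S).+1 /\ qF F S <= (qF F (step a a' S)).+1.
Proof.
move=> I; rewrite !qF_step /qF; have [? ? ? ?] := mv_diff a a' I.
by case: (F == mA S).
Qed.

Lemma inv_bounds F S : invS S -> qF F S <= h.+1 /\ tF F S <= W0.
Proof.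
case: S => p m x y ta tb; rewrite /invS /qF /tF /=.
case=> /andP [y1 y2] Hx HA HB; split.
- case: (F == m); last by lia.
  clear HA HB; case: p Hx => /= Hx; lia.
- case: F; lia.
Qed.

Lemma inv_deep S : invS S -> h <= qF (~~ mA S) S.
Proof.
case: S => p m x y ta tb; rewrite /invS /qF /=.
case=> /andP [y1 y2] _ _ _; case: m => //.
Qed.

Lemma inv_init : invS (St true true 0 h 0 0).
Proof. rewrite /invS /rem /Pout /W0 /=; split; try (apply/andP; split); lia. Qed.

End Policy.


Section Game.
Variables (N' L' : nat) (V : finType) (g : V -> Pt N' L') (gi : Pt N' L' -> V).
Hypotheses (gK : cancel g gi) (giK : cancel gi g).
Variable s : nat.
Local Notation h := s.+1.
Local Notation N := N'.+1.
Local Notation L := L'.+1.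
Hypotheses (HL : h.+1 <= L) (HN : W0 s + 3 <= N) (HV : 2 * L < #|V|).
Variables (c1 c2 : V) (f : seq bool -> V).
Local Notation e := (ev g).

Fixpoint vplay (k : nat) : seq bool * V * st :=
  match k with
  | 0 => ([::], c1, St true true 0 h 0 0)
  | k'.+1 => let P := vplay k' in
      let c' := if k' is 0 then c2 else f P.1.1 in
      let S' := step s (dep (g P.1.2)) (dep (g c')) P.2 in
      (rcons P.1.1 (dep (g c') + qF true S' <= dep (g P.1.2) + qF true P.2), c', S')
  end.
Definition vb k := (vplay k).1.1.
Definition vc k := (vplay k).1.2.
Definition vs k := (vplay k).2.
Definition av k := dep (g (vc k)).

Lemma vc_S k : vc k.+1 = if k is 0 then c2 else f (vb k).
Proof. by []. Qed.
Lemma vs_S k : vs k.+1 = step s (av k) (av k.+1) (vs k).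
Proof. by []. Qed.
Lemma vb_S k : vb k.+1 = rcons (vb k) (av k.+1 + qF true (vs k.+1) <= av k + qF true (vs k)).
Proof. by []. Qed.

Lemma vinv k : invS s (vs k).
Proof. elim: k => [|k IH]; first exact: inv_init. by rewrite vs_S; apply: inv_step. Qed.

Lemma tF_S F k : tF F (vs k.+1) = if qF F (vs k.+1) == 0 then 0 else (tF F (vs k)).+1.
Proof. by rewrite vs_S tF_step. Qed.

Lemma tF_le_k F k : tF F (vs k) <= k.
Proof.
elim: k => [|k IH]; first by case: F.
rewrite tF_S; case: eqP => _ //.
Qed.

Lemma tF_W F k : tF F (vs k) <= W0 s.
Proof. by have [] := inv_bounds F (vinv k). Qed.

Lemma qF_L F k : qF F (vs k) <= L.
Proof. have [] := inv_bounds F (vinv k); lia. Qed.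

Lemma qF_d F k : qF F (vs k.+1) <= (qF F (vs k)).+1 /\ qF F (vs k) <= (qF F (vs k.+1)).+1.
Proof. rewrite vs_S; exact: qF_diff (vinv k). Qed.

Lemma tF_back F k d : d <= tF F (vs k) -> tF F (vs (k - d)) = tF F (vs k) - d.
Proof.
elim: d => [|d IH] H; first by rewrite !subn0.
have Hk := tF_le_k F k.
have IH' := IH (ltnW H).
have E1 : k - d = (k - d.+1).+1 by lia.
move: IH'; rewrite E1 tF_S; case: eqP => _; lia.
Qed.

Definition tleg j : option 'I_N := if g (vc j) is Some (l, _) then Some l else None.
Definition Sset p := pmap id [seq tleg (p + i) | i <- iota 0 (W0 s).+1].

Lemma size_Sset p : size (Sset p) <= (W0 s).+1.
Proof. rewrite /Sset size_pmap; apply: leq_trans (count_size _ _) _; by rewrite size_map size_iota. Qed.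

Lemma notin_ex (sq : seq 'I_N) : size sq < N -> exists l, l \notin sq.
Proof.
move=> HS; case: (pickP (fun l => l \notin sq)) => [l Hl|H]; first by exists l.
have : #|'I_N| <= #|sq|.
  apply: subset_leq_card; apply/subsetP => l _; move: (H l) => /negbFE //.
rewrite card_ord => Hc0.
have Hc : N'.+1 <= size sq by exact: (leq_trans Hc0 (card_size sq)).
exfalso; lia.
Qed.

Definition leg1 p : 'I_N := odflt ord0 [pick l | l \notin Sset p].
Definition leg2 p : 'I_N := odflt ord0 [pick l | l \notin leg1 p :: Sset p].

Lemma leg1_notin p : leg1 p \notin Sset p.
Proof.
rewrite /leg1; case: pickP => [l Hl|H] //=.
have [|l Hl] := @notin_ex (Sset p); first by have := size_Sset p; lia.
by rewrite H in Hl.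
Qed.

Lemma leg2_prop p : leg2 p \notin leg1 p :: Sset p.
Proof.
rewrite /leg2; case: pickP => [l Hl|H] //=.
have [|l Hl] := @notin_ex (leg1 p :: Sset p); first by have := size_Sset p; rewrite /=; lia.
by rewrite H in Hl.
Qed.

Lemma leg2_notin p : leg2 p \notin Sset p.
Proof. by have := leg2_prop p; rewrite inE negb_or => /andP []. Qed.

Lemma leg21 p : leg2 p != leg1 p.
Proof. by have := leg2_prop p; rewrite inE negb_or => /andP []. Qed.

Lemma avoid p j l : p <= j -> j <= p + W0 s -> l \notin Sset p -> tleg j != Some l.
Proof.
move=> H1 H2 Hl; apply/eqP => Ht; move: Hl; rewrite mem_pmap map_id -Ht.
move/negP; apply; apply/mapP; exists (j - p); first by rewrite mem_iota; lia.
congr tleg; lia.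
Qed.

Definition posw (l : 'I_N) (q : nat) : V :=
  if q is q'.+1 then gi (Some (l, inord q')) else gi None.

Lemma dist_posw j l q : q <= L -> (q = 0 \/ tleg j != Some l) ->
  dist e (vc j) (posw l q) = av j + q.
Proof.
move=> Hq Hor; rewrite (dist_spec gK giK _ _ HV) /posw /av /tleg in Hor *.
case: q Hq Hor => [|q] Hq Hor.
- by rewrite giK /Dp; case: (g (vc j)) => [[l' i']|] /=; lia.
- rewrite giK; case: Hor => // Hor.
  have Hi : ((inord q : 'I_L) : nat) = q by rewrite inordK.
  case: (g (vc j)) Hor => [[l' i']|] /= Hor; rewrite Hi; last lia.
  case: (eqVneq l' l) Hor => [->|_] Hor; [by rewrite eqxx in Hor | lia].
Qed.

Lemma step_posw l l' q q' : q <= L -> q' <= L -> q' <= q.+1 -> q <= q'.+1 ->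
  (l = l' \/ q = 0 \/ q' = 0) -> posw l' q' = posw l q \/ e (posw l q) (posw l' q').
Proof.
move=> H1 H2 H3 H4 Hor; rewrite /posw /ev.
case: q H1 H3 H4 Hor => [|q]; case: q' H2 => [|q'] //= H2 H1 H3 H4 Hor; try by left.
- right; rewrite !giK /= inordK //; lia.
- right; rewrite !giK /= inordK //; lia.
- case: Hor => [<-|[]] //.
  case: (eqVneq q q') => [<-|ne]; first by left.
  right; rewrite !giK /= eqxx /= !inordK; lia.
Qed.

Definition canon F j := posw (leg1 (j - tF F (vs j))) (qF F (vs j)).

Lemma canon_dist F j : dist e (vc j) (canon F j) = av j + qF F (vs j).
Proof.
apply: dist_posw; first exact: qF_L.
right; apply: avoid (leg1_notin _); have := tF_le_k F j; have := tF_W F j; lia.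
Qed.

Lemma canon_step F j : canon F j.+1 = canon F j \/ e (canon F j) (canon F j.+1).
Proof.
rewrite /canon; have [d1 d2] := qF_d F j.
apply: step_posw => //; try exact: qF_L.
move: (tF_S F j); case: eqP => [-> _|ne ->]; first by right; right.
by left; rewrite subSS.
Qed.

Definition m := canon true.

Lemma play_eq k : play e c1 c2 f m k = (vb k, vc k).
Proof.
elim: k => [|k IH] //=; rewrite IH /=.
rewrite -vc_S vb_S /m !canon_dist //.
Qed.

Lemma cat_eq k : Defs.cat e c1 c2 f m k = vc k.
Proof. by rewrite /Defs.cat play_eq. Qed.

Lemma bit_eq k : Defs.bit e c1 c2 f m k.+1 = (av k.+1 + qF true (vs k.+1) <= av k + qF true (vs k)).
Proof. by rewrite /Defs.bit play_eq vb_S last_rcons. Qed.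

Lemma inM F k (w : nat -> V) :
  (forall j, j < k -> w j.+1 = w j \/ e (w j) (w j.+1)) ->
  (forall j, j <= k -> dist e (vc j) (w j) = av j + qF F (vs j)) ->
  w k \in Mset e c1 c2 f m k.
Proof.
move=> Hs Hd; rewrite inE; apply/existsP; exists [ffun i : 'I_k.+1 => w i].
rewrite ffunE /= eqxx /=; apply/forallP => j.
have jk := ltn_ord j.
rewrite !ffunE !inordK //; last lia.
apply/andP; split.
- case: (Hs j jk) => [->|H]; [by rewrite eqxx | by rewrite H orbT].
- rewrite !cat_eq bit_eq !Hd //; last lia.

  rewrite vs_S qF_bit ?eqxx //; exact: vinv.
Qed.

Definition mir F k j := let p := k - tF F (vs k) in
  if p <= j then posw (leg2 p) (qF F (vs j)) else canon F j.

Lemma mir_step F k j : j < k -> mir F k j.+1 = mir F k j \/ e (mir F k j) (mir F k j.+1).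
Proof.
move=> jk; rewrite /mir; set p := k - tF F (vs k).
have [d1 d2] := qF_d F j.
case: (ltnP j.+1 p) => H1.
- rewrite /= (leqNgt p j) (ltnW H1) /=; exact: canon_step.
- case: (leqP p j) => H2.
  + by apply: step_posw => //; try exact: qF_L; left.
  + have Ep : p = j.+1 by lia.
    have Hp : tF F (vs p) = 0.
      have := @tF_back F k (tF F (vs k)) (leqnn _); rewrite subnn -/p //.
    have Hq : qF F (vs j.+1) = 0.
      move: (tF_S F j); rewrite -Ep Hp Ep; case: eqP => // _ H; discriminate H.
    rewrite /canon; apply: step_posw; try exact: qF_L.
    * exact: d1.
    * exact: d2.
    * by right; right.
Qed.

Lemma mir_dist F k j : j <= k -> dist e (vc j) (mir F k j) = av j + qF F (vs j).
Proof.
move=> jk; rewrite /mir; set p := k - tF F (vs k).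
case: leqP => H; last exact: canon_dist.
apply: dist_posw; first exact: qF_L.
right; apply: avoid (leg2_notin _) => //.
have := tF_W F k; have := tF_le_k F k; rewrite /p; lia.
Qed.

Lemma witness k : s < rad e (Mset e c1 c2 f m k).
Proof.
set D := ~~ mA (vs k).
have Hy := inv_deep (vinv k); rewrite -/D in Hy.
set y := qF D (vs k) in Hy.
set p := k - tF D (vs k).
have u_in : canon D k \in Mset e c1 c2 f m k.
  apply: (@inM D) => j Hj; [exact: canon_step | exact: canon_dist].
have w_in : mir D k k \in Mset e c1 c2 f m k.
  apply: (@inM D) => j Hj; [exact: mir_step | exact: mir_dist].
have HyL : y <= L by exact: qF_L.
case Ey : y Hy HyL => [|y'] // Hy HyL.
have gu : g (canon D k) = Some (leg1 p, inord y') by rewrite /canon -/y -/p Ey /posw giK.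
have gw : g (mir D k k) = Some (leg2 p, inord y').
  by rewrite /mir -/p ifT; [rewrite -/y Ey /posw giK | rewrite /p leq_subr].
apply: (rad_ge gK giK HV u_in w_in gu gw); first by rewrite eq_sym leg21.
- rewrite inordK; lia.
- rewrite inordK; lia.
Qed.

Lemma mouse_ok k : m k.+1 = m k \/ e (m k) (m k.+1).
Proof. exact: canon_step. Qed.

End Game.


Theorem proposition3p1 (s : nat) : 0 < s ->
  let t := 12 * s in
  let n := t ^ 2 + 1 in
  exists e : rel 'I_n,
    is_tree e /\
    forall (c1 c2 : 'I_n) (f : seq bool -> 'I_n),
      exists m : nat -> 'I_n,
        (forall k, m k.+1 = m k \/ e (m k) (m k.+1)) /\
        (forall k, t %/ 12 < rad e (Mset e c1 c2 f m k)).
Proof.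
move=> s0 t n.
pose N' := 36 * s - 1.
pose L' := 4 * s - 1.
have Hc : #|{: option ('I_N'.+1 * 'I_L'.+1)}| = n.
  rewrite card_option card_prod !card_ord /n /t /N' /L'; nia.
pose g (v : 'I_n) : Pt N' L' := (enum_val (cast_ord (esym Hc) v) : option ('I_N'.+1 * 'I_L'.+1)).
pose gi (p : Pt N' L') : 'I_n := cast_ord Hc (enum_rank (p : option ('I_N'.+1 * 'I_L'.+1))).
have gK : cancel g gi by move=> v; rewrite /g /gi enum_valK cast_ordKV.
have giK : cancel gi g by move=> p; rewrite /g /gi cast_ordK enum_rankK.
have HL : s.+1 < L'.+1 by rewrite /L'; lia.
have HN : W0 s + 3 <= N'.+1 by rewrite /W0 /N'; lia.
have HV : 2 * L'.+1 < #|'I_n| by rewrite card_ord /n /t /L'; nia.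
exists (ev g); split; first exact: ev_tree gK giK.
move=> c1 c2 f; exists (m g gi s c1 c2 f); split.
- move=> k; have := @mouse_ok _ _ _ g gi giK s HL HN. move=> H. have := H HV c1 c2 f k. exact.
- have -> : t %/ 12 = s by rewrite /t mulKn.
  move=> k; exact: (witness gK giK HL HN HV c1 c2 f k).
Qed.
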